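(* Let $v:[\underline s,\overline s]\times\mathbb R\to[0,1]$ be four-times differentiable, strictly increasing in $s$ (with $\partial v/\partial s>0$), and strictly decreasing in $r$. Say that Assumption 1 (swingy moderates) holds if $$\frac{\partial^2}{\partial s\,\partial r}\ln\!\left(\frac{\partial v(s,r)}{\partial s}\right)>0\quad\text{for all } s,r.$$ Then: (1) If $v(s,r)=Q(s-r)$ for all $(s,r)$, where $Q$ is the cdf of a taste shock with strictly positive, differentiable density $q$, then Assumption 1 holds if and only if $q$ is strictly log-concave, i.e. $\frac{d^2}{dt^2}\ln q(t)<0$ for all $t$. (2) Assumption 1 implies that, for each $r$, the function $s\mapsto \partial v(s,r)/\partial r$ is strictly single-dipped (first decreasing, then increasing) in $s$.
   Context: $v(s,r)$ is interpreted as the share of type-$s$ voters voting for the designer's party when the aggregate shock is $r$. *)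

(* Defs.v *)
From Stdlib Require Import Reals.
From Coquelicot Require Import Coquelicot.
Open Scope R_scope.

Definition d_s (f : R -> R -> R) : R -> R -> R :=
  fun s r => Derive (fun s' => f s' r) s.
Definition d_r (f : R -> R -> R) : R -> R -> R :=
  fun s r => Derive (fun r' => f s r') r.

Fixpoint diffn (D : R -> R -> Prop) (n : nat) (f : R -> R -> R) : Prop :=
  match n with
  | O => True
  | S m => (forall s r, D s r -> differentiable_pt f s r)
           /\ diffn D m (d_s f) /\ diffn D m (d_r f)
  end.

Definition strip (slo shi : R) : R -> R -> Prop :=
  fun s _ => slo <= s <= shi.

Definition assumption1 (slo shi : R) (v : R -> R -> R) : Prop :=
  forall s r, slo <= s <= shi ->
    d_s (d_r (fun s' r' => ln (d_s v s' r'))) s r > 0.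

Definition strictly_log_concave (q : R -> R) : Prop :=
  forall t, Derive (fun t' => Derive (fun u => ln (q u)) t') t < 0.

Definition strictly_single_dipped (a b : R) (f : R -> R) : Prop :=
  exists m, a <= m <= b /\
    (forall x y, a <= x -> x < y -> y <= m -> f y < f x) /\
    (forall x y, m <= x -> x < y -> y <= b -> f x < f y).

(* Main.v *)
Require Import Defs.
From Stdlib Require Import Reals Lra Lia.
From Coquelicot Require Import Coquelicot.
Open Scope R_scope.

Lemma ln_le_m1 x : 0 < x -> ln x <= x - 1.
Proof. intros Hx. pose proof (exp_ineq1_le (ln x)). rewrite exp_ln in H; lra. Qed.

Lemma ln_diff_bounds a b : 0 < a -> 0 < b -> (a-b)/a <= ln a - ln b <= (a-b)/b.
Proof.
  intros Ha Hb. split.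
  - pose proof (ln_le_m1 (b/a)) as H. rewrite ln_div in H by lra.
    assert (0 < b / a) by (apply Rdiv_lt_0_compat; lra). specialize (H H0).
    replace ((a-b)/a) with (- (b/a - 1)) by (field; lra). lra.
  - pose proof (ln_le_m1 (a/b)) as H. rewrite ln_div in H by lra.
    assert (0 < a / b) by (apply Rdiv_lt_0_compat; lra). specialize (H H0).
    replace ((a-b)/b) with (a/b - 1) by (field; lra). lra.
Qed.

Lemma P_bounds a b c1 c2 h : 0 < c1 -> c1 <= a <= c2 -> c1 <= b <= c2 -> 0 < h ->
  ((a - b)/h > 0 -> (ln a - ln b)/h >= ((a-b)/h)/c2) /\
  ((a - b)/h < 0 -> (ln a - ln b)/h <= ((a-b)/h)/c2) /\
  Rabs ((ln a - ln b)/h - ((a-b)/h)/b) <= ((a-b)/h)^2 * h / c1^2.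
Proof.
  intros Hc1 Ha Hb Hh. pose proof (ln_diff_bounds a b) as [L U]; try lra.
  assert (Hih : 0 < /h) by (apply Rinv_0_lt_compat; lra).
  split; [|split].
  - intros Hd. assert (a - b > 0).
    { unfold Rdiv in Hd. destruct (Rle_or_lt (a-b) 0); auto. nra. }
    assert ((a-b)/c2 <= (a-b)/a).
    { unfold Rdiv. apply Rmult_le_compat_l; [lra|]. apply Rinv_le_contravar; lra. }
    unfold Rdiv in *. 
    replace ((a - b) * / h * / c2) with ((a-b) * / c2 * /h) by ring.
    apply Rle_ge. apply Rmult_le_compat_r; lra.
  - intros Hd. assert (a - b < 0).
    { unfold Rdiv in Hd. destruct (Rle_or_lt 0 (a-b)); auto. nra. }
    assert ((a-b)/b <= (a-b)/c2).
    { unfold Rdiv. apply Rmult_le_compat_neg_l; [lra|]. apply Rinv_le_contravar; lra. }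
    unfold Rdiv in *. 
    replace ((a - b) * / h * / c2) with ((a-b) * / c2 * /h) by ring.
    apply Rmult_le_compat_r; lra.
  - assert (E1 : (a-b)/a - (a-b)/b = - ((a-b)^2/(a*b))) by (field; lra).
    assert (E2 : (a-b)^2/(a*b) <= (a-b)^2 / c1^2).
    { unfold Rdiv. apply Rmult_le_compat_l; [apply pow2_ge_0|]. apply Rinv_le_contravar; [apply pow_lt; lra|]. simpl. rewrite Rmult_1_r. apply Rmult_le_compat; lra. }
    replace ((ln a - ln b)/h - ((a-b)/h)/b) with ((ln a - ln b - (a-b)/b) / h) by (field; lra).
    replace (((a-b)/h)^2 * h / c1^2) with (((a-b)^2/c1^2)/h) by (field; lra).
    unfold Rdiv at 1 3. rewrite Rabs_mult, (Rabs_pos_eq (/h)) by lra.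
    apply Rmult_le_compat_r; [lra|]. apply Rabs_le. lra.
Qed.

Lemma hs_pos n : 0 < Rbar_loc_seq (Finite 0) n.
Proof. simpl. rewrite Rplus_0_l. apply Rinv_0_lt_compat. pose proof (pos_INR n). lra. Qed.

Lemma hs_small (e : R) : 0 < e -> exists N, forall n, (N <= n)%nat -> Rbar_loc_seq (Finite 0) n < e.
Proof.
  intros He. pose proof (is_lim_seq_Rbar_loc_seq (Finite 0)) as H.
  apply is_lim_seq_Reals in H. destruct (H e He) as [N HN]. exists N. intros n Hn.
  specialize (HN n Hn). unfold R_dist in HN. rewrite Rminus_0_r in HN.
  pose proof (hs_pos n). rewrite Rabs_pos_eq in HN; lra.
Qed.

Lemma Lim0 u : LimSup_seq u = p_infty \/ LimInf_seq u = m_infty -> real (Lim_seq u) = 0.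
Proof.
  unfold Lim_seq. intros [H|H]; rewrite H.
  - destruct (LimInf_seq u); simpl; lra.
  - destruct (LimSup_seq u); simpl; lra.
Qed.

Lemma LimSup_near u w (l : R) : is_LimSup_seq w l ->
  (forall eps : posreal, exists N, forall n, (N <= n)%nat -> Rabs (u n - w n) < eps) ->
  is_LimSup_seq u l.
Proof.
  intros Hw Hn eps. assert (He2 : 0 < eps/2) by (pose proof (cond_pos eps); lra).
  destruct (Hw (mkposreal _ He2)) as [H1 [N1 H2]]. destruct (Hn (mkposreal _ He2)) as [N3 H3].
  simpl in *. split.
  - intros N. destruct (H1 (max N N3)) as [n [Hn1 Hn2]]. exists n. split; [lia|].
    specialize (H3 n ltac:(lia)). apply Rabs_lt_between in H3. lra.
  - exists (max N1 N3). intros n Hn'. specialize (H2 n ltac:(lia)). specialize (H3 n ltac:(lia)).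
    apply Rabs_lt_between in H3. lra.
Qed.

Lemma LimInf_near u w (l : R) : is_LimInf_seq w l ->
  (forall eps : posreal, exists N, forall n, (N <= n)%nat -> Rabs (u n - w n) < eps) ->
  is_LimInf_seq u l.
Proof.
  intros Hw Hn eps. assert (He2 : 0 < eps/2) by (pose proof (cond_pos eps); lra).
  destruct (Hw (mkposreal _ He2)) as [H1 [N1 H2]]. destruct (Hn (mkposreal _ He2)) as [N3 H3].
  simpl in *. split.
  - intros N. destruct (H1 (max N N3)) as [n [Hn1 Hn2]]. exists n. split; [lia|].
    specialize (H3 n ltac:(lia)). apply Rabs_lt_between in H3. lra.
  - exists (max N1 N3). intros n Hn'. specialize (H2 n ltac:(lia)). specialize (H3 n ltac:(lia)).
    apply Rabs_lt_between in H3. lra.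
Qed.

Lemma LimSup_is u : is_LimSup_seq u (LimSup_seq u).
Proof. unfold LimSup_seq. destruct (ex_LimSup_seq u); auto. Qed.
Lemma LimInf_is u : is_LimInf_seq u (LimInf_seq u).
Proof. unfold LimInf_seq. destruct (ex_LimInf_seq u); auto. Qed.

Lemma seq_ln (q p : nat -> R) b c1 c2 N0 : 0 < c1 -> c1 <= b <= c2 ->
  (forall n, (N0 <= n)%nat -> exists a, c1 <= a <= c2 /\
      q n = (a - b) / Rbar_loc_seq (Finite 0) n /\ p n = (ln a - ln b) / Rbar_loc_seq (Finite 0) n) ->
  real (Lim_seq p) = real (Lim_seq q) / b.
Proof.
  intros Hc1 Hb Hn.
  assert (Hc2 : 0 < c2) by lra.
  assert (KEY : forall n, (N0 <= n)%nat ->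
    (q n > 0 -> p n >= q n / c2) /\ (q n < 0 -> p n <= q n / c2) /\
    Rabs (p n - q n / b) <= (q n)^2 * Rbar_loc_seq (Finite 0) n / c1^2).
  { intros n Hn0. destruct (Hn n Hn0) as [a [Ha [Hq Hp]]]. rewrite Hq, Hp.
    apply P_bounds; auto; try lra. apply hs_pos. }
  pose proof (LimSup_is q) as HS. pose proof (LimInf_is q) as HI.
  pose proof (LimSup_LimInf_seq_le q) as Hle.
  assert (A1 : LimSup_seq q = p_infty -> LimSup_seq p = p_infty).
  { intros E. rewrite E in HS. apply is_LimSup_seq_unique. intros M N.
      destruct (HS (Rmax (M*c2) 0) (max N N0)) as [n [Hn1 Hn2]]. exists n. split; [lia|].
      destruct (KEY n ltac:(lia)) as [K1 _].
      assert (q n > 0) by (pose proof (Rmax_r (M*c2) 0); lra).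
      specialize (K1 H). assert (M * c2 < q n) by (pose proof (Rmax_l (M*c2) 0); lra).
      assert (M < q n / c2). { apply Rmult_lt_reg_r with c2; auto. unfold Rdiv. rewrite Rmult_assoc, Rinv_l; lra. }
      lra. }
  assert (A2 : LimInf_seq q = m_infty -> LimInf_seq p = m_infty).
  { intros E. rewrite E in HI. apply is_LimInf_seq_unique. intros M N.
      destruct (HI (Rmin (M*c2) 0) (max N N0)) as [n [Hn1 Hn2]]. exists n. split; [lia|].
      destruct (KEY n ltac:(lia)) as [_ [K1 _]].
      assert (q n < 0) by (pose proof (Rmin_r (M*c2) 0); lra).
      specialize (K1 H). assert (q n < M * c2) by (pose proof (Rmin_l (M*c2) 0); lra).
      assert (q n / c2 < M). { apply Rmult_lt_reg_r with c2; auto. unfold Rdiv. rewrite Rmult_assoc, Rinv_l; lra. }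
      lra. }
  destruct (LimSup_seq q) as [s| |] eqn:ES.
  2:{ rewrite (Lim0 q) by auto. rewrite (Lim0 p) by auto. unfold Rdiv; ring. }
  2:{ destruct (LimInf_seq q) eqn:EI; simpl in Hle; try contradiction.
      rewrite (Lim0 q) by auto. rewrite (Lim0 p) by auto. unfold Rdiv; ring. }
  destruct (LimInf_seq q) as [i| |] eqn:EI.
  2:{ simpl in Hle; contradiction. }
  2:{ rewrite (Lim0 q) by auto. rewrite (Lim0 p) by auto. unfold Rdiv; ring. }
  destruct (HS (mkposreal 1 Rlt_0_1)) as [_ [N1 HN1]].
  destruct (HI (mkposreal 1 Rlt_0_1)) as [_ [N2 HN2]]. simpl in HN1, HN2.
  set (M := Rabs (s + 1) + Rabs (i - 1)).
  assert (Hbd : forall n, (max N1 N2 <= n)%nat -> (q n)^2 <= M^2).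
  { intros n Hn'. specialize (HN1 n ltac:(lia)). specialize (HN2 n ltac:(lia)).
    assert (Rabs (q n) <= M).
    { unfold M. apply Rabs_le. pose proof (Rabs_pos (s+1)). pose proof (Rabs_pos (i-1)).
      pose proof (Rle_abs (s+1)). pose proof (Rle_abs (-(i-1))). rewrite Rabs_Ropp in H2. lra. }
    rewrite <- (pow2_abs (q n)). apply pow_incr. split; [apply Rabs_pos|auto]. }
  assert (Hb0 : 0 < b) by lra.
  assert (NEAR : forall eps : posreal, exists N, forall n, (N <= n)%nat -> Rabs (p n - / b * q n) < eps).
  { intros eps. assert (Hk : 0 < eps * c1^2 / (M^2 + 1)).
    { apply Rdiv_lt_0_compat. apply Rmult_lt_0_compat. apply cond_pos. apply pow_lt; lra.
      pose proof (pow2_ge_0 M); lra. }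
    destruct (hs_small _ Hk) as [N3 HN3]. exists (max (max N1 N2) (max N0 N3)). intros n Hn'.
    destruct (KEY n ltac:(lia)) as [_ [_ K3]]. specialize (Hbd n ltac:(lia)). specialize (HN3 n ltac:(lia)).
    pose proof (hs_pos n) as Hh.
    replace (/ b * q n) with (q n / b) by (unfold Rdiv; ring).
    eapply Rle_lt_trans; [apply K3|].
    assert (Hc : 0 < c1^2) by (apply pow_lt; lra).
    apply Rle_lt_trans with (M^2 * Rbar_loc_seq (Finite 0) n / c1^2).
    { unfold Rdiv. apply Rmult_le_compat_r. left; apply Rinv_0_lt_compat; auto.
      apply Rmult_le_compat_r; lra. }
    apply Rlt_le_trans with ((M^2+1) * Rbar_loc_seq (Finite 0) n / c1^2).
    { unfold Rdiv. apply Rmult_lt_compat_r. apply Rinv_0_lt_compat; auto.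
      apply Rmult_lt_compat_r; lra. }
    apply Rle_trans with ((M^2+1) * (eps * c1 ^ 2 / (M ^ 2 + 1)) / c1^2).
    { unfold Rdiv. apply Rmult_le_compat_r. left; apply Rinv_0_lt_compat; auto.
      apply Rmult_le_compat_l. pose proof (pow2_ge_0 M); lra. lra. }
    right. pose proof (pow2_ge_0 M). field. repeat split; try lra. }
  assert (HSp : is_LimSup_seq p (/ b * s)).
  { apply LimSup_near with (fun n => / b * q n); auto.
    apply (is_LimSup_seq_scal_pos (/b) q (Finite s)); auto. apply Rinv_0_lt_compat; auto. }
  assert (HIp : is_LimInf_seq p (/ b * i)).
  { apply LimInf_near with (fun n => / b * q n); auto.
    apply (is_LimInf_seq_scal_pos (/b) q (Finite i)); auto. apply Rinv_0_lt_compat; auto. }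
  unfold Lim_seq. rewrite ES, EI, (is_LimSup_seq_unique _ _ HSp), (is_LimInf_seq_unique _ _ HIp).
  simpl. field. lra.
Qed.

Lemma Derive_ln_gen (f : R -> R) x c1 c2 d : 0 < c1 -> 0 < d ->
  (forall y, x <= y <= x + d -> c1 <= f y <= c2) ->
  Derive (fun y => ln (f y)) x = Derive f x / f x.
Proof.
  intros Hc1 Hd Hf. unfold Derive, Lim.
  destruct (hs_small d Hd) as [N HN].
  apply seq_ln with c1 c2 N; auto. apply Hf; lra.
  intros n Hn. exists (f (x + Rbar_loc_seq (Finite 0) n)). split.
  - apply Hf. pose proof (hs_pos n). specialize (HN n Hn). lra.
  - split; reflexivity.
Qed.

Lemma part_s f x y : differentiable_pt f x y -> ex_derive (fun x' => f x' y) x.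
Proof.
  intros [lx [ly H]]. exists lx. apply is_derive_Reals.
  pose proof (derivable_pt_lim_comp_2d f id (fct_cte y) x lx ly 1 0 H (derivable_pt_lim_id x) (derivable_pt_lim_const y x)) as H0.
  unfold id, fct_cte in H0. replace (lx * 1 + ly * 0) with lx in H0 by ring. exact H0.
Qed.

Lemma part_r f x y : differentiable_pt f x y -> ex_derive (fun y' => f x y') y.
Proof.
  intros [lx [ly H]]. exists ly. apply is_derive_Reals.
  pose proof (derivable_pt_lim_comp_2d f (fct_cte x) id y lx ly 0 1 H (derivable_pt_lim_const x y) (derivable_pt_lim_id y)) as H0.
  unfold id, fct_cte in H0. replace (lx * 0 + ly * 1) with ly in H0 by ring. exact H0.
Qed.

Lemma onesided_unique f g x a b :
  derivable_pt_lim f x a -> derivable_pt_lim g x b ->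
  (exists d, 0 < d /\ ((forall y, x <= y <= x + d -> f y = g y) \/ (forall y, x - d <= y <= x -> f y = g y))) ->
  a = b.
Proof.
  intros Hf Hg [d [Hd Hfg]].
  destruct (Req_dec a b) as [|Hne]; auto. exfalso.
  assert (He : 0 < Rabs (a - b) / 2) by (apply Rdiv_lt_0_compat; [apply Rabs_pos_lt; lra| lra]).
  destruct (Hf _ He) as [d1 H1]. destruct (Hg _ He) as [d2 H2].
  set (m := Rmin d (Rmin d1 d2) / 2).
  assert (Hm : 0 < m).
  { unfold m. apply Rdiv_lt_0_compat; [|lra]. repeat apply Rmin_pos; auto; apply cond_pos. }
  assert (Hm1 : m < d1).
  { unfold m. pose proof (Rmin_r d (Rmin d1 d2)). pose proof (Rmin_l d1 d2). pose proof (cond_pos d1). lra. }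
  assert (Hm2 : m < d2).
  { unfold m. pose proof (Rmin_r d (Rmin d1 d2)). pose proof (Rmin_r d1 d2). pose proof (cond_pos d2). lra. }
  assert (Hm3 : m < d).
  { unfold m. pose proof (Rmin_l d (Rmin d1 d2)). lra. }
  assert (Hq : exists h, h <> 0 /\ Rabs h < d1 /\ Rabs h < d2 /\ f (x + h) = g (x + h) /\ f x = g x).
  { destruct Hfg as [E|E].
    - exists m. rewrite Rabs_pos_eq by lra. repeat split; try lra; apply E; lra.
    - exists (-m). rewrite Rabs_Ropp, Rabs_pos_eq by lra. repeat split; try lra; apply E; lra. }
  destruct Hq as [h [Hh0 [Hh1 [Hh2 [E1 E2]]]]].
  specialize (H1 h Hh0 Hh1). specialize (H2 h Hh0 Hh2).
  rewrite E1, E2 in H1.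
  assert (Rabs (a - b) < Rabs (a-b)/2 + Rabs (a-b)/2).
  { replace (a - b) with ((a - (g (x+h) - g x)/h) + ((g (x+h) - g x)/h - b)) at 1 by ring.
    eapply Rle_lt_trans; [apply Rabs_triang|]. rewrite <- Rabs_Ropp in H1.
    replace (- ((g (x + h) - g x) / h - a)) with (a - (g (x + h) - g x) / h) in H1 by ring. lra. }
  lra.
Qed.

Lemma cont_pos_near f x y : continuity_2d_pt f x y -> 0 < f x y ->
  exists d, 0 < d /\ forall u v, Rabs (u - x) < d -> Rabs (v - y) < d -> f x y / 2 <= f u v <= 3 * f x y / 2.
Proof.
  intros Hc Hp. assert (He : 0 < f x y / 2) by lra.
  destruct (Hc (mkposreal _ He)) as [d Hd]. exists d. split; [apply cond_pos|].
  intros u v Hu Hv. specialize (Hd u v Hu Hv). simpl in Hd. apply Rabs_lt_between in Hd. lra.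
Qed.

Lemma shift_derive (L : R -> R) c x : (forall t, ex_derive L t) ->
  is_derive (fun s' => - L (s' - c)) x (- Derive L (x - c)).
Proof.
  intros HL.
  assert (H1 : is_derive (fun s' => s' - c) x 1) by (auto_derive; auto; ring).
  assert (H2 : is_derive L (x - c) (Derive L (x - c))) by (apply Derive_correct; auto).
  pose proof (is_derive_comp L (fun s' => s' - c) x _ _ H2 H1) as H3.
  pose proof (is_derive_opp _ _ _ H3) as H4.
  unfold scal in H4; simpl in H4; unfold mult in H4; simpl in H4.
  replace (- Derive L (x - c)) with (opp (1 * Derive L (x - c))).
  exact H4. unfold opp; simpl. ring.
Qed.

Theorem proposition5 (slo shi : R) (v : R -> R -> R) :
  slo < shi ->
  (forall s r, slo <= s <= shi -> 0 <= v s r <= 1) ->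
  diffn (strip slo shi) 4 v ->
  (forall s1 s2 r, slo <= s1 -> s1 < s2 -> s2 <= shi -> v s1 r < v s2 r) ->
  (forall s r, slo <= s <= shi -> d_s v s r > 0) ->
  (forall s r1 r2, slo <= s <= shi -> r1 < r2 -> v s r2 < v s r1) ->
  (forall (Q q : R -> R),
      (forall t, 0 < q t) ->
      (forall t, ex_derive q t) ->
      (forall t, is_derive Q t (q t)) ->
      is_lim Q m_infty 0 ->
      is_lim Q p_infty 1 ->
      (forall s r, slo <= s <= shi -> v s r = Q (s - r)) ->
      (assumption1 slo shi v <-> strictly_log_concave q))
  /\
  (assumption1 slo shi v ->
     forall r, strictly_single_dipped slo shi (fun s => d_r v s r)).
Proof.
  intros Hlt _ Hdiff _ Hpos _.
  destruct Hdiff as [Hv [[Hvs [_ [Hvsr _]]] [Hvr [[Hvrs _] _]]]].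
  unfold strip in *.
  assert (HF : forall s r, slo <= s <= shi -> locally s (fun s' =>
     d_r (fun s0 r0 => ln (d_s v s0 r0)) s' r = d_r (d_s v) s' r / d_s v s' r)).
  { intros s r Hs.
    destruct (cont_pos_near (d_s v) s r (differentiable_continuity_pt _ _ _ (Hvs s r Hs)) (Hpos s r Hs))
      as [d [Hd Hb]].
    assert (Hd2 : 0 < d / 2) by lra.
    exists (mkposreal _ Hd2). intros s' Hs'. change (Rabs (s' - s) < d / 2) in Hs'.
    unfold d_r at 1.
    apply (Derive_ln_gen (fun r' => d_s v s' r') r (d_s v s r / 2) (3 * d_s v s r / 2) (d / 2)).
    - pose proof (Hpos s r Hs); lra.
    - lra.
    - intros y Hy. apply Hb. lra. rewrite Rabs_pos_eq; lra. }
  assert (HRd : forall s r, slo <= s <= shi -> ex_derive (fun s' => d_r (d_s v) s' r / d_s v s' r) s).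
  { intros s r Hs. apply ex_derive_div.
    - apply part_s. apply Hvsr; auto.
    - apply part_s. apply Hvs; auto.
    - pose proof (Hpos s r Hs); lra. }
  assert (HK : forall s r, slo <= s <= shi ->
     d_s (d_r (fun s' r' => ln (d_s v s' r'))) s r = Derive (fun s' => d_r (d_s v) s' r / d_s v s' r) s).
  { intros s r Hs. unfold d_s at 1. apply Derive_ext_loc. apply HF; auto. }
  split.
  - intros Q q Hq Hqd HQd _ _ Hvq.
    assert (H_ds : forall s r, slo <= s <= shi -> d_s v s r = q (s - r)).
    { intros s r Hs. unfold d_s.
      apply onesided_unique with (f := fun s' => v s' r) (g := fun s' => Q (s' - r)) (x := s).
      - apply is_derive_Reals. apply Derive_correct. apply part_s, Hv; auto.
      - apply is_derive_Reals.
        assert (H1 : is_derive (fun s' => s' - r) s 1) by (auto_derive; auto; ring).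
        pose proof (is_derive_comp Q (fun s' => s' - r) s _ _ (HQd (s - r)) H1) as H3.
        unfold scal in H3; simpl in H3; unfold mult in H3; simpl in H3.
        rewrite Rmult_1_l in H3. exact H3.
      - destruct (Rlt_dec s shi) as [Hs'|Hs'].
        + exists (shi - s). split; [lra|]. left. intros y Hy. apply Hvq. lra.
        + exists (shi - slo). split; [lra|]. right. intros y Hy. apply Hvq. lra. }
    assert (H_dsr : forall s r, slo <= s <= shi -> d_r (d_s v) s r = - Derive q (s - r)).
    { intros s r Hs. unfold d_r.
      rewrite (Derive_ext (fun r' => d_s v s r') (fun r' => q (s - r'))) by (intro; apply H_ds; auto).
      rewrite (Derive_comp q (fun r' => s - r') r) by (auto; auto_derive; auto).
      replace (Derive (fun r' => s - r') r) with (-1).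
      ring. symmetry. apply is_derive_unique. auto_derive; auto; ring. }
    set (Lp := fun t => Derive (fun u => ln (q u)) t).
    assert (HLp : forall t, Lp t = Derive q t / q t).
    { intros t. unfold Lp.
      rewrite (Derive_comp ln q t).
      rewrite (is_derive_unique ln (q t) (/ q t)) by (apply is_derive_ln; auto).
      unfold Rdiv; ring.
      exists (/ q t). apply is_derive_ln; auto. auto. }
    assert (H_R : forall s r, slo <= s <= shi -> d_r (d_s v) s r / d_s v s r = - Lp (s - r)).
    { intros s r Hs. rewrite H_dsr, H_ds, HLp by auto. field. pose proof (Hq (s - r)); lra. }
    assert (HLpd : forall t, ex_derive Lp t).
    { intros t. set (s0 := (slo + shi) / 2). set (r0 := s0 - t).
      set (Rr0 := fun s' => d_r (d_s v) s' r0 / d_s v s' r0).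
      assert (HR0 : ex_derive Rr0 s0) by (apply HRd; unfold s0; lra).
      apply ex_derive_ext_loc with (f := fun u => - Rr0 (u + r0)).
      - assert (Hdl : 0 < (shi - slo) / 2) by lra.
        exists (mkposreal _ Hdl). intros u Hu. change R in u. change (Rabs (u - t) < (shi - slo) / 2) in Hu.
        apply Rabs_lt_between in Hu. unfold Rr0. rewrite H_R.
        replace (u + r0 - r0) with u by ring. apply Ropp_involutive.
        unfold r0, s0. lra.
      - apply (ex_derive_opp (fun u => Rr0 (u + r0))).
        apply (ex_derive_comp Rr0 (fun u => u + r0)).
        + replace (t + r0) with s0 by (unfold r0; ring). auto.
        + auto_derive; auto. }
    assert (H_main : forall s r, slo <= s <= shi ->
       d_s (d_r (fun s' r' => ln (d_s v s' r'))) s r = - Derive Lp (s - r)).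
    { intros s r Hs. rewrite HK by auto.
      apply onesided_unique with (f := fun s' => d_r (d_s v) s' r / d_s v s' r)
          (g := fun s' => - Lp (s' - r)) (x := s).
      - apply is_derive_Reals. apply Derive_correct. apply HRd; auto.
      - apply is_derive_Reals. apply shift_derive. auto.
      - destruct (Rlt_dec s shi) as [Hs'|Hs'].
        + exists (shi - s). split; [lra|]. left. intros y Hy. apply H_R. lra.
        + exists (shi - slo). split; [lra|]. right. intros y Hy. apply H_R. lra. }
    unfold assumption1, strictly_log_concave. split.
    + intros HA t. specialize (HA slo (slo - t) ltac:(lra)). rewrite H_main in HA by lra.
      replace (slo - (slo - t)) with t in HA by ring. fold Lp. lra.
    + intros HL s r Hs. rewrite H_main by auto. specialize (HL (s - r)). fold Lp in HL. lra.
  - intros HA r.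
    set (Rf := fun s' => d_r (d_s v) s' r / d_s v s' r).
    assert (HRpos : forall s, slo <= s <= shi -> Derive Rf s > 0).
    { intros s Hs. unfold Rf. rewrite <- HK by auto. apply HA; auto. }
    assert (HRlim : forall s, slo <= s <= shi -> derivable_pt_lim Rf s (Derive Rf s)).
    { intros s Hs. apply is_derive_Reals. apply Derive_correct. apply HRd; auto. }
    assert (HRinc : forall a b, slo <= a -> a < b -> b <= shi -> Rf a < Rf b).
    { intros a b Ha Hab Hb.
      destruct (MVT_cor2 Rf (Derive Rf) a b Hab) as [c [Hc1 Hc2]].
      { intros c Hc. apply HRlim; lra. }
      assert (Derive Rf c > 0) by (apply HRpos; lra).
      assert (0 < Derive Rf c * (b - a)) by (apply Rmult_lt_0_compat; lra). lra. }
    assert (HRcont : forall a, slo <= a <= shi -> continuity_pt Rf a).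
    { intros a Ha. apply derivable_continuous_pt. apply ex_derive_Reals_0. apply HRd; auto. }
    set (psi := fun s => d_r v s r).
    assert (Hpsi : forall c, slo < c < shi -> Derive psi c = Rf c * d_s v c r).
    { intros c Hc. unfold psi, Rf.
      assert (E : Derive (fun s => d_r v s r) c = d_r (d_s v) c r).
      { refine (Schwarz v c r _ _ _).
        - assert (Hdl : 0 < Rmin (c - slo) (shi - c)) by (apply Rmin_pos; lra).
          exists (mkposreal _ Hdl). simpl. intros u w Hu Hw.
          pose proof (Rmin_l (c - slo) (shi - c)). pose proof (Rmin_r (c - slo) (shi - c)).
          apply Rabs_lt_between in Hu.
          assert (Hus : slo <= u <= shi) by lra.
          split; [|split; [|split]].
          + apply part_s, Hv; auto.
          + apply part_r, Hv; auto.
          + apply (part_s (d_r v)), Hvr; auto.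
          + apply (part_r (d_s v)), Hvs; auto.
        - apply (differentiable_continuity_pt (d_s (d_r v))). apply Hvrs; simpl; lra.
        - apply (differentiable_continuity_pt (d_r (d_s v))). apply Hvsr; simpl; lra. }
      rewrite E. field. pose proof (Hpos c r ltac:(lra)); lra. }
    assert (Hpsilim : forall c, slo <= c <= shi -> derivable_pt_lim psi c (Derive psi c)).
    { intros c Hc. apply is_derive_Reals. apply Derive_correct. unfold psi. apply (part_s (d_r v)). apply Hvr; auto. }
    assert (DEC : forall x y, slo <= x -> x < y -> y <= shi ->
              (forall c, x < c < y -> Rf c < 0) -> psi y < psi x).
    { intros x y Hx Hxy Hy Hneg.
      destruct (MVT_cor2 psi (Derive psi) x y Hxy) as [c [Hc1 Hc2]].
      { intros c Hc. apply Hpsilim; lra. }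
      rewrite Hpsi in Hc1 by lra. specialize (Hneg c Hc2). pose proof (Hpos c r ltac:(lra)).
      assert (Rf c * d_s v c r < 0) by nra.
      assert (Rf c * d_s v c r * (y - x) < 0) by nra.
      lra. }
    assert (INC : forall x y, slo <= x -> x < y -> y <= shi ->
              (forall c, x < c < y -> Rf c > 0) -> psi x < psi y).
    { intros x y Hx Hxy Hy Hp.
      destruct (MVT_cor2 psi (Derive psi) x y Hxy) as [c [Hc1 Hc2]].
      { intros c Hc. apply Hpsilim; lra. }
      rewrite Hpsi in Hc1 by lra. specialize (Hp c Hc2). pose proof (Hpos c r ltac:(lra)).
      assert (0 < Rf c * d_s v c r) by (apply Rmult_lt_0_compat; lra).
      assert (0 < Rf c * d_s v c r * (y - x)) by (apply Rmult_lt_0_compat; lra).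
      lra. }
    unfold strictly_single_dipped. fold psi.
    destruct (Rle_dec 0 (Rf slo)) as [H0|H0].
    + exists slo. split; [lra|]. split.
      * intros x y Hx Hxy Hy. lra.
      * intros x y Hx Hxy Hy. apply INC; auto. intros c Hc.
        pose proof (HRinc slo c ltac:(lra) ltac:(lra) ltac:(lra)). lra.
    + destruct (Rle_dec (Rf shi) 0) as [H1|H1].
      * exists shi. split; [lra|]. split.
        -- intros x y Hx Hxy Hy. apply DEC; auto. intros c Hc.
           pose proof (HRinc c shi ltac:(lra) ltac:(lra) ltac:(lra)). lra.
        -- intros x y Hx Hxy Hy. lra.
      * destruct (Ranalysis5.IVT_interv Rf slo shi HRcont Hlt ltac:(lra) ltac:(lra)) as [z [Hz Hz0]].
        exists z. split; [lra|]. split.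
        -- intros x y Hx Hxy Hy. apply DEC; try lra. intros c Hc.
           pose proof (HRinc c z ltac:(lra) ltac:(lra) ltac:(lra)). lra.
        -- intros x y Hx Hxy Hy. apply INC; try lra. intros c Hc.
           pose proof (HRinc z c ltac:(lra) ltac:(lra) ltac:(lra)). lra.
Qed.
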